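(* Let $\{(\Gamma_t,\theta_t)\}_{t\in[0,\underline t)}$ be a solution of the framed curvature flow with $\theta$-velocity $\upsilon_\theta$, and let $\Sigma$ be its trajectory surface, parametrized by $(u,t)\mapsto\gamma(t,u)$. At points where $\kappa>0$, the mean curvature $H$ and the Gaussian curvature $K$ of $\Sigma$ are $$H=-\psi_2+\chi,\qquad K=-\psi_3^2-\psi_2\chi,$$ where $$\chi:=\frac{\upsilon_\theta}{\kappa}+\frac{\kappa\,\partial_s\psi_3+2\,\partial_s\kappa\,\psi_3}{\kappa^3}\,\psi_1+\frac{\partial_s^2\kappa-\kappa\,\psi_3^2}{\kappa^3}\,\psi_2 .$$
   Context: Let $S^1=\mathbb{R}/2\pi\mathbb{Z}$. A family of closed curves $\Gamma_t\subset\mathbb{R}^3$, $t\in[0,\underline t)$, is given by sufficiently smooth parametrizations $\gamma(t,\cdot):S^1\to\mathbb{R}^3$; $g:=\|\partial_u\gamma\|$, $ds=g\,du$, $\partial_s=g^{-1}\partial_u$. $T,N,B$ denote the Frenet frame, $\kappa$ the curvature and $\tau$ the torsion of $\Gamma_t$. For an angle function $\theta\in\mathcal C^{1,2}([0,\underline t)\times S^1;S^1)$, $\theta_t:=\theta(t,\cdot)$, define the $\theta$-normal $\nu_\theta=\cos\theta\,N+\sin\theta\,B$, the $\theta$-binormal $\beta_\theta=-\sin\theta\,N+\cos\theta\,B=T\times\nu_\theta$, and $\psi_1=\kappa\cos\theta$, $\psi_2=\kappa\sin\theta$, $\psi_3=\tau+\partial_s\theta$. The family solves the framed curvature flow with $\theta$-velocity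 $\upsilon_\theta\in\mathcal C^1([0,\underline t)\times S^1;\mathbb{R})$ if $\partial_t\gamma=\kappa\nu_\theta$ and $\partial_t\theta=\upsilon_\theta$ on $[0,\underline t)\times S^1$ (with given initial data). The trajectory surface is $\Sigma=\bigcup_{t\in[0,\underline t)}\Gamma_t$, parametrized by $\gamma(t,u)$. Its first and second fundamental forms are taken in the coordinates $(u,t)$ with respect to the unit normal $\beta_\theta$; $K=\det\mathrm{I\!I}/\det\mathrm{I}$ and the mean curvature is $H=\mathrm{tr}(\mathrm{I\!I}\,\mathrm{I}^{-1})$ (the sum of the principal curvatures). *)

(* Defs.v *)
From Stdlib Require Import Reals List.
From Coquelicot Require Import Coquelicot.
Open Scope R_scope.

Record V3 := mkV { vx : R; vy : R; vz : R }.

Definition vadd (a b : V3) : V3 := mkV (vx a + vx b) (vy a + vy b) (vz a + vz b).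
Definition vscal (c : R) (a : V3) : V3 := mkV (c * vx a) (c * vy a) (c * vz a).
Definition dot (a b : V3) : R := vx a * vx b + vy a * vy b + vz a * vz b.
Definition cross (a b : V3) : V3 :=
  mkV (vy a * vz b - vz a * vy b) (vz a * vx b - vx a * vz b) (vx a * vy b - vy a * vx b).
Definition vnorm (a : V3) : R := sqrt (dot a a).

(* scalar fields f t u ; t = time, u = curve parameter *)
Definition dt (f : R -> R -> R) : R -> R -> R := fun t u => Derive (fun t' => f t' u) t.
Definition du (f : R -> R -> R) : R -> R -> R := fun t u => Derive (fun u' => f t u') u.

Definition dtV (F : R -> R -> V3) : R -> R -> V3 := fun t u =>
  mkV (dt (fun t u => vx (F t u)) t u) (dt (fun t u => vy (F t u)) t u)
      (dt (fun t u => vz (F t u)) t u).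
Definition duV (F : R -> R -> V3) : R -> R -> V3 := fun t u =>
  mkV (du (fun t u => vx (F t u)) t u) (du (fun t u => vy (F t u)) t u)
      (du (fun t u => vz (F t u)) t u).

Fixpoint pder (w : list bool) (f : R -> R -> R) : R -> R -> R :=
  match w with
  | nil => f
  | b :: w' => if b then dt (pder w' f) else du (pder w' f)
  end.

Definition jcont (f : R -> R -> R) (t u : R) : Prop :=
  continuous (fun p : R * R => f (fst p) (snd p)) (t, u).

Definition smooth_on (P : R -> Prop) (f : R -> R -> R) : Prop :=
  forall (w : list bool) (t u : R), P t ->
    ex_derive (fun t' => pder w f t' u) t /\
    ex_derive (fun u' => pder w f t u') u /\
    jcont (pder w f) t u.

Definition smoothV_on (P : R -> Prop) (F : R -> R -> V3) : Prop :=
  smooth_on P (fun t u => vx (F t u)) /\ smooth_on P (fun t u => vy (F t u)) /\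
  smooth_on P (fun t u => vz (F t u)).

Definition C12_on (P : R -> Prop) (f : R -> R -> R) : Prop :=
  forall t u, P t ->
    ex_derive (fun t' => f t' u) t /\ ex_derive (fun u' => f t u') u /\
    ex_derive (fun u' => du f t u') u /\
    jcont f t u /\ jcont (dt f) t u /\ jcont (du f) t u /\ jcont (du (du f)) t u.

Definition C1_on (P : R -> Prop) (f : R -> R -> R) : Prop :=
  forall t u, P t ->
    ex_derive (fun t' => f t' u) t /\ ex_derive (fun u' => f t u') u /\
    jcont f t u /\ jcont (dt f) t u /\ jcont (du f) t u.

Section Geom.
Variable gam : R -> R -> V3.

Definition speed (t u : R) : R := vnorm (duV gam t u).
Definition ds (f : R -> R -> R) : R -> R -> R := fun t u => du f t u / speed t u.
Definition dsV (F : R -> R -> V3) : R -> R -> V3 := fun t u => vscal (/ speed t u) (duV F t u).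

Definition Tan : R -> R -> V3 := dsV gam.
Definition kappa (t u : R) : R := vnorm (dsV Tan t u).
Definition Nor (t u : R) : V3 := vscal (/ kappa t u) (dsV Tan t u).
Definition Bin (t u : R) : V3 := cross (Tan t u) (Nor t u).
Definition tors (t u : R) : R := dot (dsV Nor t u) (Bin t u).

Variable th : R -> R -> R.
Definition nuth (t u : R) : V3 :=
  vadd (vscal (cos (th t u)) (Nor t u)) (vscal (sin (th t u)) (Bin t u)).
Definition betath (t u : R) : V3 :=
  vadd (vscal (- sin (th t u)) (Nor t u)) (vscal (cos (th t u)) (Bin t u)).

Definition psi1 (t u : R) : R := kappa t u * cos (th t u).
Definition psi2 (t u : R) : R := kappa t u * sin (th t u).
Definition psi3 (t u : R) : R := tors t u + ds th t u.

(** Fundamental forms of the trajectory surface in coordinates (u,t)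
    (index 1 = u, index 2 = t), with respect to the unit normal beta_theta. *)
Definition I11 t u := dot (duV gam t u) (duV gam t u).
Definition I12 t u := dot (duV gam t u) (dtV gam t u).
Definition I21 t u := dot (dtV gam t u) (duV gam t u).
Definition I22 t u := dot (dtV gam t u) (dtV gam t u).
Definition II11 t u := dot (duV (duV gam) t u) (betath t u).
Definition II12 t u := dot (duV (dtV gam) t u) (betath t u).
Definition II21 t u := dot (dtV (duV gam) t u) (betath t u).
Definition II22 t u := dot (dtV (dtV gam) t u) (betath t u).

Definition detI t u := I11 t u * I22 t u - I12 t u * I21 t u.
Definition detII t u := II11 t u * II22 t u - II12 t u * II21 t u.

Definition gaussK (t u : R) : R := detII t u / detI t u.
(* H = tr (II * I^{-1}), with I^{-1} = (1/det I) [[I22, -I12], [-I21, I11]] *)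
Definition meanH (t u : R) : R :=
  (II11 t u * I22 t u - II12 t u * I21 t u - II21 t u * I12 t u + II22 t u * I11 t u)
  / detI t u.

End Geom.

(* Main.v *)
Require Import Defs.
From Stdlib Require Import Reals List ZArith Lra Psatz.
From Coquelicot Require Import Coquelicot.
Open Scope R_scope.


Lemma isd_eq (f : R -> R) (x d1 d2 : R) : is_derive f x d1 -> d1 = d2 -> is_derive f x d2.
Proof. intros; subst; auto. Qed.
Lemma isd_plus f g x df dg : is_derive f x df -> is_derive g x dg ->
  is_derive (fun y => f y + g y) x (df + dg).
Proof. intros H H0; exact (is_derive_plus f g x df dg H H0). Qed.
Lemma isd_opp f x df : is_derive f x df -> is_derive (fun y => - f y) x (- df).
Proof. intros H; exact (is_derive_opp f x df H). Qed.
Lemma isd_minus f g x df dg : is_derive f x df -> is_derive g x dg ->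
  is_derive (fun y => f y - g y) x (df - dg).
Proof. intros H H0. apply (isd_plus f (fun y => - g y)); auto. apply isd_opp; auto. Qed.
Lemma isd_mult f g x df dg : is_derive f x df -> is_derive g x dg ->
  is_derive (fun y => f y * g y) x (df * g x + f x * dg).
Proof. intros H H0; exact (is_derive_mult f g x df dg H H0 Rmult_comm). Qed.
Ltac dtac := match goal with
 | |- is_derive (fun y => _ + _) _ _ => apply isd_plus
 | |- is_derive (fun y => _ - _) _ _ => apply isd_minus
 | |- is_derive (fun y => - _) _ _ => apply isd_opp
 | |- is_derive (fun y => _ * _) _ _ => apply isd_mult
 end.
Lemma isd_const (c x : R) : is_derive (fun _ => c) x 0.
Proof. exact (is_derive_const (K:=R_AbsRing) c x). Qed.
Lemma isd_id (x : R) : is_derive (fun y => y) x 1.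
Proof. exact (is_derive_id (K:=R_AbsRing) x). Qed.
Lemma isd_inv f x df : is_derive f x df -> f x <> 0 ->
  is_derive (fun y => / f y) x (- df / f x ^ 2).
Proof. intros; now apply is_derive_inv. Qed.
Lemma isd_sqrt f x df : is_derive f x df -> 0 < f x ->
  is_derive (fun y => sqrt (f y)) x (df / (2 * sqrt (f x))).
Proof. intros H H0; exact (is_derive_sqrt f x df H H0). Qed.
Lemma isd_cos f x df : is_derive f x df -> is_derive (fun y => cos (f y)) x (- sin (f x) * df).
Proof. intros H. eapply isd_eq. exact (is_derive_comp cos f x _ _ (is_derive_cos _) H).
 simpl. unfold scal; simpl; unfold mult; simpl. ring. Qed.
Lemma isd_sin f x df : is_derive f x df -> is_derive (fun y => sin (f y)) x (cos (f x) * df).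
Proof. intros H. eapply isd_eq. exact (is_derive_comp sin f x _ _ (is_derive_sin _) H).
 simpl. unfold scal; simpl; unfold mult; simpl. ring. Qed.

Lemma ex_isd f x : ex_derive f x -> is_derive f x (Derive f x).
Proof. intros; now apply Derive_correct. Qed.

Lemma V3_ext a b : vx a = vx b -> vy a = vy b -> vz a = vz b -> a = b.
Proof. destruct a, b; simpl; intros; subst; reflexivity. Qed.

Ltac vunf := unfold dot, cross, vadd, vscal in *; simpl in *.
Ltac vring := apply V3_ext; vunf; ring.

Definition v0 := mkV 0 0 0.

Lemma dot_comm a b : dot a b = dot b a. Proof. vunf; ring. Qed.
Lemma dot_add_l a b c : dot (vadd a b) c = dot a c + dot b c. Proof. vunf; ring. Qed.
Lemma dot_add_r a b c : dot c (vadd a b) = dot c a + dot c b. Proof. vunf; ring. Qed.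
Lemma dot_scal_l k a c : dot (vscal k a) c = k * dot a c. Proof. vunf; ring. Qed.
Lemma dot_scal_r k a c : dot c (vscal k a) = k * dot c a. Proof. vunf; ring. Qed.
Lemma dot_cross_l a b c : dot (cross a b) c = dot a (cross b c). Proof. vunf; ring. Qed.
Lemma cross_self a : cross a a = v0. Proof. apply V3_ext; unfold v0; vunf; ring. Qed.
Lemma dot_v0_l a : dot v0 a = 0. Proof. unfold v0; vunf; ring. Qed.
Lemma cross_scal_l k a b : cross (vscal k a) b = vscal k (cross a b). Proof. vring. Qed.
Lemma cross_scal_r k a b : cross a (vscal k b) = vscal k (cross a b). Proof. vring. Qed.
Lemma cross_add_l a b c : cross (vadd a b) c = vadd (cross a c) (cross b c). Proof. vring. Qed.
Lemma cross_add_r a b c : cross c (vadd a b) = vadd (cross c a) (cross c b). Proof. vring. Qed.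
Lemma bac_cab a b c : cross a (cross b c) = vadd (vscal (dot a c) b) (vscal (- dot a b) c).
Proof. vring. Qed.
Lemma cross_anti a b : cross a b = vscal (-1) (cross b a). Proof. vring. Qed.
Lemma lagrange a b : dot (cross a b) (cross a b) = dot a a * dot b b - dot a b ^ 2.
Proof. vunf; ring. Qed.
Lemma cramer a b c x : vscal (dot (cross a b) c) x =
  vadd (vscal (dot x a) (cross b c)) (vadd (vscal (dot x b) (cross c a)) (vscal (dot x c) (cross a b))).
Proof. vring. Qed.
Lemma dot_self_nonneg a : 0 <= dot a a.
Proof. vunf; nra. Qed.
Lemma dot_self_zero a : dot a a = 0 -> a = v0.
Proof. destruct a as [x y z]; vunf; intros H; unfold v0.
 assert (x = 0) by nra; assert (y = 0) by nra; assert (z = 0) by nra; subst; auto. Qed.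
Lemma vscal_v0 k : vscal k v0 = v0. Proof. unfold v0; vring. Qed.
Lemma vscal1 a : vscal 1 a = a. Proof. vring. Qed.

Section Frame.
Variables T N : V3.
Hypothesis HTT : dot T T = 1.
Hypothesis HNN : dot N N = 1.
Hypothesis HTN : dot T N = 0.
Lemma fr_TB : dot T (cross T N) = 0. Proof. vunf; ring. Qed.
Lemma fr_NB : dot N (cross T N) = 0. Proof. vunf; ring. Qed.
Lemma fr_BB : dot (cross T N) (cross T N) = 1.
Proof. rewrite lagrange, HTT, HNN, HTN; ring. Qed.
Lemma fr_NxB : cross N (cross T N) = T.
Proof. rewrite bac_cab. rewrite HNN, (dot_comm N T), HTN. vring. Qed.
Lemma fr_BxT : cross (cross T N) T = N.
Proof. rewrite cross_anti, bac_cab, HTT, HTN. vring. Qed.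
Lemma fr_decomp x : x = vadd (vscal (dot x T) T) (vadd (vscal (dot x N) N) (vscal (dot x (cross T N)) (cross T N))).
Proof. pose proof (cramer T N (cross T N) x) as H. rewrite fr_BB, fr_NxB, fr_BxT, vscal1 in H.
 exact H. Qed.
End Frame.

Definition vder (F : R -> V3) (x : R) (D : V3) :=
  is_derive (fun y => vx (F y)) x (vx D) /\ is_derive (fun y => vy (F y)) x (vy D) /\
  is_derive (fun y => vz (F y)) x (vz D).
Definition DV (F : R -> V3) (x : R) : V3 :=
  mkV (Derive (fun y => vx (F y)) x) (Derive (fun y => vy (F y)) x) (Derive (fun y => vz (F y)) x).

Lemma vder_DV F x D : vder F x D -> DV F x = D.
Proof. intros [h1 [h2 h3]]; apply V3_ext; simpl; now apply is_derive_unique. Qed.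
Lemma vder_eq F x D1 D2 : vder F x D1 -> D1 = D2 -> vder F x D2.
Proof. intros; subst; auto. Qed.
Lemma vder_ext F G x D : (forall y, F y = G y) -> vder F x D -> vder G x D.
Proof. intros E [h1 [h2 h3]]; split; [|split]; eapply is_derive_ext; try eassumption; intros; simpl; now rewrite E. Qed.
Lemma vder_ext_loc F G x D : locally x (fun y => F y = G y) -> vder F x D -> vder G x D.
Proof. intros E [h1 [h2 h3]]; split; [|split]; eapply is_derive_ext_loc; try eassumption;
  eapply filter_imp; try apply E; intros; simpl; now rewrite H. Qed.
Lemma vder_add F G x D E : vder F x D -> vder G x E -> vder (fun y => vadd (F y) (G y)) x (vadd D E).
Proof. intros [h1 [h2 h3]] [k1 [k2 k3]]; split; [|split]; simpl; apply isd_plus; assumption. Qed.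
Lemma vder_scal f F x df D : is_derive f x df -> vder F x D ->
  vder (fun y => vscal (f y) (F y)) x (vadd (vscal df (F x)) (vscal (f x) D)).
Proof. intros hf [h1 [h2 h3]]; split; [|split]; simpl; apply isd_mult; assumption. Qed.
Lemma vder_cross F G x D E : vder F x D -> vder G x E ->
  vder (fun y => cross (F y) (G y)) x (vadd (cross D (G x)) (cross (F x) E)).
Proof. intros [h1 [h2 h3]] [k1 [k2 k3]]; split; [|split]; simpl;
  (eapply isd_eq; [repeat dtac; eassumption | vunf; ring]). Qed.
Lemma der_dot F G x D E : vder F x D -> vder G x E ->
  is_derive (fun y => dot (F y) (G y)) x (dot D (G x) + dot (F x) E).
Proof. intros [h1 [h2 h3]] [k1 [k2 k3]]; unfold dot;
  (eapply isd_eq; [repeat dtac; eassumption | vunf; ring]). Qed.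


Fixpoint Ck (n : nat) (U : R -> Prop) (f : R -> R) : Prop :=
  match n with O => True | S m => (forall x, U x -> ex_derive f x) /\ Ck m U (Derive f) end.

Lemma Ck_ex n U f x : Ck (S n) U f -> U x -> ex_derive f x.
Proof. intros [H _]; auto. Qed.
Lemma Ck_D n U f : Ck (S n) U f -> Ck n U (Derive f).
Proof. intros [_ H]; auto. Qed.
Lemma Ck_mono : forall n U f, Ck (S n) U f -> Ck n U f.
Proof. induction n; intros U f H; simpl; auto. destruct H as [H1 H2]; split; auto. Qed.
Lemma Ck_le : forall m n U f, (m <= n)%nat -> Ck n U f -> Ck m U f.
Proof. intros m n U f H; induction H; auto. intros; apply IHle, Ck_mono; auto. Qed.
Lemma Ck_sub : forall n (U V : R -> Prop) f, (forall x, V x -> U x) -> Ck n U f -> Ck n V f.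
Proof. induction n; simpl; auto. intros U V f HVU [H1 H2]; split; eauto. Qed.

Section CkU.
Variable U : R -> Prop.
Hypothesis HU : open U.

Lemma loc_U x : U x -> locally x U.
Proof. intros; apply HU; auto. Qed.

Lemma Ck_ext : forall n f g, (forall x, U x -> f x = g x) -> Ck n U f -> Ck n U g.
Proof. induction n; simpl; auto. intros f g E [H1 H2]; split.
 - intros x Hx. apply (ex_derive_ext_loc f). eapply filter_imp. 2: apply (loc_U x Hx). intros; auto. auto.
 - apply (IHn (Derive f)); auto. intros x Hx. apply Derive_ext_loc.
   eapply filter_imp. 2: apply (loc_U x Hx). intros; auto.
Qed.

Lemma Ck_const : forall n c, Ck n U (fun _ => c).
Proof. induction n; simpl; auto. intros c; split. intros; apply ex_derive_const.
 apply (Ck_ext n (fun _ => 0)); auto. intros; rewrite Derive_const; auto. Qed.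

Lemma Ck_id : forall n, Ck n U (fun x => x).
Proof. destruct n; simpl; auto. split. intros; apply ex_derive_id.
 apply (Ck_ext n (fun _ => 1)). intros; symmetry; apply Derive_id. apply Ck_const. Qed.

Lemma Ck_plus : forall n f g, Ck n U f -> Ck n U g -> Ck n U (fun x => f x + g x).
Proof. induction n; simpl; auto. intros f g [F1 F2] [G1 G2]; split.
 - intros x Hx; apply (ex_derive_plus f g); auto.
 - apply (Ck_ext n (fun x => Derive f x + Derive g x)); auto.
   intros x Hx; rewrite (Derive_plus f g); auto.
Qed.

Lemma Ck_opp : forall n f, Ck n U f -> Ck n U (fun x => - f x).
Proof. induction n; simpl; auto. intros f [F1 F2]; split.
 - intros x Hx; apply (ex_derive_opp f); auto.
 - apply (Ck_ext n (fun x => - Derive f x)); auto.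
   intros x Hx; rewrite (Derive_opp f); auto.
Qed.

Lemma Ck_mult : forall n f g, Ck n U f -> Ck n U g -> Ck n U (fun x => f x * g x).
Proof. induction n; simpl; auto. intros f g HF HG.
 pose proof (Ck_mono n U f HF) as HF'. pose proof (Ck_mono n U g HG) as HG'.
 destruct HF as [F1 F2]; destruct HG as [G1 G2]; split.
 - intros x Hx; apply (ex_derive_mult f g); auto.
 - apply (Ck_ext n (fun x => Derive f x * g x + f x * Derive g x)).
   intros x Hx; rewrite (Derive_mult f g); auto.
   apply Ck_plus; apply IHn; auto.
Qed.

Lemma Ck_minus n f g : Ck n U f -> Ck n U g -> Ck n U (fun x => f x - g x).
Proof. intros; apply (Ck_plus n f (fun x => - g x)); auto; apply Ck_opp; auto. Qed.

Lemma Ck_comp : forall n (V : R -> Prop) phi f, open V -> Ck n V phi -> Ck n U f ->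
  (forall x, U x -> V (f x)) -> Ck n U (fun x => phi (f x)).
Proof. induction n; simpl; auto. intros V phi f HV HP HF HUV.
 pose proof (Ck_mono n U f HF) as HF'.
 destruct HP as [P1 P2]; destruct HF as [F1 F2]; split.
 - intros x Hx; apply (ex_derive_comp phi f); auto.
 - apply (Ck_ext n (fun x => Derive phi (f x) * Derive f x)).
   intros x Hx; rewrite (Derive_comp phi f); auto. ring.
   apply Ck_mult; auto. apply (IHn V); auto.
Qed.
End CkU.

Lemma Ck_inv_base : forall n, Ck n (fun x => x <> 0) (fun x => / x).
Proof. induction n; simpl; auto. split.
 - intros x Hx. apply (ex_derive_inv (fun x => x)); auto. apply ex_derive_id.
 - apply (Ck_ext _ (open_neq 0) n (fun x => - (/ x * / x))).
   intros x Hx. rewrite (Derive_inv (fun x => x)); auto. rewrite Derive_id. field; auto. apply ex_derive_id.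
   apply Ck_opp. apply open_neq. apply Ck_mult; auto. apply open_neq.
Qed.

Lemma Ck_sqrt_base : forall n, Ck n (fun x => 0 < x) sqrt.
Proof. induction n; simpl; auto. split.
 - intros x Hx. exists (1 / (2 * sqrt x)). apply (isd_sqrt (fun x => x) x 1).
   apply isd_id. auto.
 - apply (Ck_ext _ (open_gt 0) n (fun x => / 2 * / sqrt x)).
   intros x Hx. symmetry. apply is_derive_unique.
   eapply isd_eq. apply (isd_sqrt (fun x => x) x 1).
   apply isd_id. auto. field. apply Rgt_not_eq, sqrt_lt_R0; auto.
   apply Ck_mult. apply open_gt. apply Ck_const, open_gt.
   apply (Ck_comp _ (open_gt 0) n (fun x => x <> 0)). apply open_neq. apply Ck_inv_base. auto.
   intros x Hx. apply Rgt_not_eq, sqrt_lt_R0; auto.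
Qed.

Lemma Ck_cos_sin : forall n, Ck n (fun _ => True) cos /\ Ck n (fun _ => True) sin.
Proof. induction n; simpl; auto. destruct IHn as [IC IS]. split; split.
 - intros x _; exists (- sin x); apply is_derive_cos.
 - apply (Ck_ext _ open_true n (fun x => - sin x)). intros; symmetry; apply is_derive_unique, is_derive_cos.
   apply Ck_opp; auto. apply open_true.
 - intros x _; exists (cos x); apply is_derive_sin.
 - apply (Ck_ext _ open_true n cos). intros; symmetry; apply is_derive_unique, is_derive_sin. auto.
Qed.

Section CkU2.
Variable U : R -> Prop.
Hypothesis HU : open U.
Lemma Ck_inv n f : Ck n U f -> (forall x, U x -> f x <> 0) -> Ck n U (fun x => / f x).
Proof. intros; apply (Ck_comp U HU n (fun x => x <> 0)); auto. apply open_neq. apply Ck_inv_base. Qed.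
Lemma Ck_sqrt n f : Ck n U f -> (forall x, U x -> 0 < f x) -> Ck n U (fun x => sqrt (f x)).
Proof. intros; apply (Ck_comp U HU n (fun x => 0 < x)); auto. apply open_gt. apply Ck_sqrt_base. Qed.
Lemma Ck_cos n f : Ck n U f -> Ck n U (fun x => cos (f x)).
Proof. intros; apply (Ck_comp U HU n (fun _ => True)); auto. apply open_true. apply Ck_cos_sin. Qed.
Lemma Ck_sin n f : Ck n U f -> Ck n U (fun x => sin (f x)).
Proof. intros; apply (Ck_comp U HU n (fun _ => True)); auto. apply open_true. apply Ck_cos_sin. Qed.

Definition CkV n (F : R -> V3) := Ck n U (fun y => vx (F y)) /\ Ck n U (fun y => vy (F y)) /\ Ck n U (fun y => vz (F y)).
Lemma CkV_D n F : CkV (S n) F -> CkV n (DV F).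
Proof. intros [[_ A] [[_ B] [_ C]]]; repeat split; auto. Qed.
Lemma CkV_mono n F : CkV (S n) F -> CkV n F.
Proof. intros [A [B C]]; repeat split; apply Ck_mono; auto. Qed.
Lemma CkV_le m n F : (m <= n)%nat -> CkV n F -> CkV m F.
Proof. intros H [A [B C]]; repeat split; eapply Ck_le; eauto. Qed.
Lemma CkV_vder n F x : CkV (S n) F -> U x -> vder F x (DV F x).
Proof. intros [[A _] [[B _] [C _]]] Hx; split; [|split]; simpl; apply ex_isd; auto. Qed.
Lemma CkV_add n F G : CkV n F -> CkV n G -> CkV n (fun y => vadd (F y) (G y)).
Proof. intros [A [B C]] [A' [B' C']]; repeat split; simpl; apply Ck_plus; auto. Qed.
Lemma CkV_scal n f F : Ck n U f -> CkV n F -> CkV n (fun y => vscal (f y) (F y)).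
Proof. intros H [A [B C]]; repeat split; simpl; apply Ck_mult; auto. Qed.
Lemma Ck_dot n F G : CkV n F -> CkV n G -> Ck n U (fun y => dot (F y) (G y)).
Proof. intros [A [B C]] [A' [B' C']]; unfold dot; repeat apply Ck_plus; auto; apply Ck_mult; auto. Qed.
Lemma CkV_cross n F G : CkV n F -> CkV n G -> CkV n (fun y => cross (F y) (G y)).
Proof. intros [A [B C]] [A' [B' C']]; repeat split; simpl; apply Ck_minus; auto; apply Ck_mult; auto. Qed.
Lemma CkV_ext n F G : (forall x, U x -> F x = G x) -> CkV n F -> CkV n G.
Proof. intros E [A [B C]]; repeat split.
 apply (Ck_ext U HU n (fun y => vx (F y))); auto; intros; rewrite E; auto.
 apply (Ck_ext U HU n (fun y => vy (F y))); auto; intros; rewrite E; auto.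
 apply (Ck_ext U HU n (fun y => vz (F y))); auto; intros; rewrite E; auto. Qed.
End CkU2.


Definition full : R -> Prop := fun _ => True.

Lemma smooth_Ck_u (P : R -> Prop) f t : smooth_on P f -> P t ->
  forall n w, Ck n full (fun u => pder w f t u).
Proof. intros Hs Ht n; induction n; simpl; auto. intros w; split.
 - intros x _; apply (Hs w t x Ht).
 - exact (IHn (false :: w)).
Qed.

Lemma sqrt_pos_inv x : 0 < sqrt x -> 0 < x.
Proof. intros H; destruct (Rle_dec x 0) as [h|h]; [rewrite sqrt_neg_0 in H; lra | lra]. Qed.

Lemma vnorm_sq a : vnorm a * vnorm a = dot a a.
Proof. unfold vnorm; apply sqrt_sqrt, dot_self_nonneg. Qed.

Lemma vnorm_rescale a : a = vscal (vnorm a) (vscal (/ vnorm a) a).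
Proof. destruct (Req_dec (vnorm a) 0) as [h|h].
 - assert (dot a a = 0) by (rewrite <- vnorm_sq, h; ring).
   apply dot_self_zero in H. subst. rewrite !vscal_v0; auto.
 - vunf; apply V3_ext; simpl; field; auto.
Qed.

Section AtT.
Variable gam : R -> R -> V3.
Variable t : R.
Hypothesis HP : forall n, CkV full n (fun u => duV gam t u).
Hypothesis Hg : forall u, speed gam t u > 0.

Let P u := duV gam t u.
Let Q u := duV (duV gam) t u.
Let g u := speed gam t u.
Let Tn u := Tan gam t u.
Let K u := dsV gam (Tan gam) t u.
Let ka u := kappa gam t u.
Let N u := Nor gam t u.
Let B u := Bin gam t u.

Lemma g_def u : g u = sqrt (dot (P u) (P u)). Proof. reflexivity. Qed.
Lemma PP_pos u : 0 < dot (P u) (P u).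
Proof. apply sqrt_pos_inv. apply (Hg u). Qed.
Lemma g_neq u : g u <> 0. Proof. apply Rgt_not_eq, Hg. Qed.
Lemma g_sq u : g u * g u = dot (P u) (P u).
Proof. apply sqrt_sqrt. left; apply PP_pos. Qed.

Lemma Ck_g n : Ck n full g.
Proof. apply (Ck_sqrt full open_true n (fun u => dot (P u) (P u))).
 apply (Ck_dot full open_true n P P (HP n) (HP n)). intros; apply PP_pos. Qed.

Lemma CkV_T n : CkV full n Tn.
Proof. apply (CkV_scal full open_true n (fun u => / g u) P).
 apply Ck_inv. apply open_true. apply Ck_g. intros; apply g_neq. apply HP. Qed.

Lemma CkV_DT n : CkV full n (DV Tn).
Proof. apply CkV_D, CkV_T. Qed.

Lemma CkV_K n : CkV full n K.
Proof. apply (CkV_scal full open_true n (fun u => / g u) (DV Tn)).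
 apply Ck_inv. apply open_true. apply Ck_g. intros; apply g_neq. apply CkV_DT. Qed.

Lemma vder_P u : vder P u (Q u).
Proof. apply (CkV_vder full 0 P u (HP 1)); exact I. Qed.

Lemma der_g u : is_derive g u (dot (Q u) (Tn u)).
Proof. eapply isd_eq. apply isd_sqrt. apply der_dot; apply vder_P. apply PP_pos.
 fold (g u). unfold Tn, Tan, dsV. fold (P u). fold (g u). rewrite dot_scal_r, dot_comm.
 change (sqrt (dot (P u) (P u))) with (g u). pose proof (g_neq u). field; auto. Qed.

Lemma vder_T u : vder Tn u (vadd (vscal (- dot (Q u) (Tn u) / (g u) ^ 2) (P u)) (vscal (/ g u) (Q u))).
Proof. apply (vder_scal (fun u => / g u) P). apply isd_inv. apply der_g. apply g_neq. apply vder_P. Qed.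

Lemma T_def u : Tn u = vscal (/ g u) (P u). Proof. reflexivity. Qed.
Lemma P_gT u : P u = vscal (g u) (Tn u).
Proof. rewrite T_def. pose proof (g_neq u). apply V3_ext; vunf; field; auto. Qed.

Lemma TT u : dot (Tn u) (Tn u) = 1.
Proof. rewrite T_def, dot_scal_l, dot_scal_r, <- g_sq. pose proof (g_neq u); field; auto. Qed.

Lemma DT_gK u : DV Tn u = vscal (g u) (K u).
Proof. unfold K, dsV. change (speed gam t u) with (g u). change (duV (Tan gam) t u) with (DV Tn u).
 pose proof (g_neq u). apply V3_ext; vunf; field; auto. Qed.

Lemma K_formula u : K u = vscal (/ (g u) ^ 2) (vadd (Q u) (vscal (- dot (Q u) (Tn u)) (Tn u))).
Proof. unfold K, dsV. change (speed gam t u) with (g u). change (duV (Tan gam) t u) with (DV Tn u).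
 rewrite (vder_DV _ _ _ (vder_T u)).
 rewrite T_def. pose proof (g_neq u). apply V3_ext; vunf; field; auto. Qed.

Lemma vder_T' u : vder Tn u (vscal (g u) (K u)).
Proof. rewrite <- DT_gK. apply (CkV_vder full 0 Tn u (CkV_T 1)); exact I. Qed.

Lemma const_deriv0 (f : R -> R) x c d : locally x (fun y => f y = c) -> is_derive f x d -> d = 0.
Proof. intros Hl Hd. apply (is_derive_ext_loc f (fun _ => c)) in Hd; auto.
 pose proof (isd_const c x). apply is_derive_unique in Hd. apply is_derive_unique in H. congruence. Qed.

Lemma TK u : dot (Tn u) (K u) = 0.
Proof. pose proof (der_dot _ _ u _ _ (vder_T' u) (vder_T' u)) as H.
 apply (const_deriv0 _ u 1) in H. 2: { apply filter_forall; intros; apply TT. }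
 rewrite dot_scal_l, dot_scal_r, (dot_comm (K u)) in H. pose proof (g_neq u).
 assert (E : g u * (2 * dot (Tn u) (K u)) = 0) by lra.
 apply Rmult_integral in E as [h|h]. contradiction. lra. Qed.

Lemma ka_def u : ka u = sqrt (dot (K u) (K u)). Proof. reflexivity. Qed.
Lemma K_kaN u : K u = vscal (ka u) (N u).
Proof. apply vnorm_rescale. Qed.

Lemma ka_cont u : continuous ka u.
Proof. unfold ka, kappa, vnorm. apply continuous_sqrt_comp. apply (ex_derive_continuous (K:=R_AbsRing) (V:=R_NormedModule)).
 fold (K u). pose proof (CkV_vder full 0 K u (CkV_K 1) I) as H. eexists. apply der_dot; apply H. Qed.

Definition Uk := fun u => 0 < ka u.
Lemma open_Uk : open Uk.
Proof. intros u Hu. pose proof (ka_cont u) as H. apply filterlim_locally with (eps := mkposreal _ Hu) in H.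
 eapply filter_imp. 2: exact H. intros y Hy. unfold Uk. simpl in Hy.
 unfold ball in Hy; simpl in Hy; unfold AbsRing_ball, abs, minus, plus, opp in Hy; simpl in Hy.
 apply Rabs_def2 in Hy. lra. Qed.

Lemma KK_pos u : Uk u -> 0 < dot (K u) (K u).
Proof. intros H; apply sqrt_pos_inv; exact H. Qed.

Lemma CkV_sub (U V : R -> Prop) n F : (forall x, V x -> U x) -> CkV U n F -> CkV V n F.
Proof. intros H [A [B' C]]; repeat split; eapply Ck_sub; eauto. Qed.

Lemma CkV_K_U n : CkV Uk n K.
Proof. apply (CkV_sub full); [intros; exact I | apply CkV_K]. Qed.

Lemma Ck_ka n : Ck n Uk ka.
Proof. apply (Ck_sqrt Uk open_Uk n (fun u => dot (K u) (K u))).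
 apply (Ck_dot Uk open_Uk n K K); apply CkV_K_U.
 apply KK_pos. Qed.

Lemma N_def u : N u = vscal (/ ka u) (K u). Proof. reflexivity. Qed.
Lemma B_def u : B u = cross (Tn u) (N u). Proof. reflexivity. Qed.
Lemma ka_pos u : Uk u -> 0 < ka u. Proof. auto. Qed.

Lemma Ck_g_U n : Ck n Uk g.
Proof. eapply Ck_sub; [|apply Ck_g]; intros; exact I. Qed.
Lemma CkV_T_U n : CkV Uk n Tn.
Proof. apply (CkV_sub full); [intros; exact I | apply CkV_T]. Qed.

Lemma CkV_N n : CkV Uk n N.
Proof. apply (CkV_scal Uk open_Uk n (fun u => / ka u) K).
 apply Ck_inv. apply open_Uk. apply Ck_ka. intros u H; apply Rgt_not_eq, H. apply CkV_K_U. Qed.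
Lemma CkV_B n : CkV Uk n B.
Proof. apply (CkV_cross Uk open_Uk n Tn N). apply CkV_T_U. apply CkV_N. Qed.

Lemma Ck_tors n : Ck n Uk (fun u => tors gam t u).
Proof. unfold tors. apply (Ck_dot Uk open_Uk n (fun u => dsV gam (Nor gam) t u) B).
 apply (CkV_scal Uk open_Uk n (fun u => / g u) (DV N)).
 apply Ck_inv. apply open_Uk. apply Ck_g_U. intros; apply g_neq. apply CkV_D, CkV_N. apply CkV_B. Qed.

Lemma NN u : Uk u -> dot (N u) (N u) = 1.
Proof. intros H. rewrite N_def, dot_scal_l, dot_scal_r. pose proof (KK_pos u H).
 rewrite ka_def. assert (sqrt (dot (K u) (K u)) * sqrt (dot (K u) (K u)) = dot (K u) (K u)) by (apply sqrt_sqrt; lra).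
 assert (sqrt (dot (K u) (K u)) <> 0) by (apply Rgt_not_eq, sqrt_lt_R0; auto).
 field_simplify; auto. rewrite <- Rsqr_pow2. unfold Rsqr. rewrite H1. field. lra. Qed.

Lemma TN u : dot (Tn u) (N u) = 0.
Proof. rewrite N_def, dot_scal_r, TK; ring. Qed.

Lemma TB u : dot (Tn u) (B u) = 0. Proof. apply fr_TB. Qed.
Lemma NB u : dot (N u) (B u) = 0. Proof. apply fr_NB. Qed.
Lemma BB u : Uk u -> dot (B u) (B u) = 1. Proof. intros; apply fr_BB; auto using TT, NN, TN. Qed.

Lemma tors_def u : tors gam t u = / g u * dot (DV N u) (B u).
Proof. unfold tors, dsV. rewrite dot_scal_l. reflexivity. Qed.

Lemma vder_N_D u : Uk u -> vder N u (DV N u).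
Proof. intros H; apply (CkV_vder Uk 0 N u (CkV_N 1) H). Qed.

Lemma Frenet_N u : Uk u ->
  vder N u (vadd (vscal (- g u * ka u) (Tn u)) (vscal (g u * tors gam t u) (B u))).
Proof. intros Hu. pose proof (vder_N_D u Hu) as HD. eapply vder_eq. exact HD.
 assert (E1 : dot (DV N u) (N u) = 0).
 { pose proof (der_dot _ _ u _ _ HD HD) as H. apply (const_deriv0 _ u 1) in H.
   rewrite (dot_comm (N u)) in H. lra. eapply filter_imp. 2: apply (open_Uk u Hu). intros; apply NN; auto. }
 assert (E2 : dot (DV N u) (Tn u) = - g u * ka u).
 { pose proof (der_dot _ _ u _ _ (vder_T' u) HD) as H. apply (const_deriv0 _ u 0) in H.
   rewrite dot_scal_l, K_kaN, dot_scal_l, NN in H; auto. rewrite dot_comm. lra.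
   apply filter_forall; intros; apply TN. }
 assert (E3 : dot (DV N u) (B u) = g u * tors gam t u).
 { rewrite tors_def. pose proof (g_neq u). field; auto. }
 rewrite (fr_decomp (Tn u) (N u) (TT u) (NN u Hu) (TN u) (DV N u)) at 1.
 change (cross (Tn u) (N u)) with (B u). rewrite E1, E2, E3. vring. Qed.

Lemma Frenet_B u : Uk u -> vder B u (vscal (- g u * tors gam t u) (N u)).
Proof. intros Hu. eapply vder_eq. apply vder_cross. apply vder_T'. apply Frenet_N; auto.
 rewrite K_kaN, B_def.
 assert (H : cross (Tn u) (cross (Tn u) (N u)) = vscal (-1) (N u)).
 { rewrite bac_cab, TT, TN. vring. }
 repeat (rewrite ?cross_add_r, ?cross_add_l, ?cross_scal_r, ?cross_scal_l, ?cross_self, ?vscal_v0).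
 change (Tan gam t u) with (Tn u). rewrite H. unfold v0; vring. Qed.
End AtT.


Section Strip.
Variable a : R.
Variable tbar : Rbar.
Definition Sst (t : R) : Prop := a < t /\ Rbar_lt t tbar.

Lemma S_nbhd t : Sst t -> exists d : posreal, forall s, Rabs (s - t) < d -> Sst s.
Proof. unfold Sst. intros [H1 H2]. destruct tbar as [b| |]; simpl in H2.
 - assert (0 < Rmin (t - a) (b - t)) by (apply Rmin_pos; lra).
   exists (mkposreal _ H). intros s Hs; simpl in Hs. apply Rabs_def2 in Hs.
   pose proof (Rmin_l (t - a) (b - t)); pose proof (Rmin_r (t - a) (b - t)). split; simpl; lra.
 - assert (0 < t - a) by lra. exists (mkposreal _ H). intros s Hs; simpl in Hs. apply Rabs_def2 in Hs.
   split; simpl; auto; lra.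
 - contradiction.
Qed.

Lemma jcont_2d h t u : jcont h t u -> continuity_2d_pt h t u.
Proof. intros H. apply continuity_2d_pt_filterlim. exact H. Qed.

Lemma Schwarz_pder f w t u : smooth_on Sst f -> Sst t ->
  dt (du (pder w f)) t u = du (dt (pder w f)) t u.
Proof. intros Hs Ht. destruct (S_nbhd t Ht) as [d Hd].
 unfold dt, du. apply (Schwarz (pder w f) t u).
 - exists d. intros t' u' H1 H2. pose proof (Hd t' H1) as HS.
   split; [apply (Hs w t' u' HS)|]. split; [apply (Hs w t' u' HS)|].
   split; [apply (Hs (false :: w) t' u' HS)|apply (Hs (true :: w) t' u' HS)].
 - apply jcont_2d. apply (Hs (true :: false :: w) t u Ht).
 - apply jcont_2d. apply (Hs (false :: true :: w) t u Ht).
Qed.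

Lemma Schwarz2 f w t u : smooth_on Sst f -> Sst t ->
  dt (du (du (pder w f))) t u = du (du (dt (pder w f))) t u.
Proof. intros Hs Ht. change (du (pder w f)) with (pder (false :: w) f).
 rewrite (Schwarz_pder f (false :: w) t u Hs Ht). simpl.
 unfold du at 1 3. apply Derive_ext. intros u'. apply (Schwarz_pder f w t u' Hs Ht).
Qed.
End Strip.

Lemma right_deriv_unique (f g : R -> R) x l1 l2 (d : R) : 0 < d ->
  is_derive f x l1 -> is_derive g x l2 -> (forall y, x <= y < x + d -> f y = g y) -> l1 = l2.
Proof. intros Hd H1 H2 E.
 pose proof (isd_minus f g x l1 l2 H1 H2) as H. apply is_derive_Reals in H.
 destruct (Req_dec (l1 - l2) 0) as [h|h]; [lra|].
 assert (Hp : 0 < Rabs (l1 - l2) / 2) by (apply Rabs_pos_lt in h; lra).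
 destruct (H _ Hp) as [del Hdel].
 set (hh := Rmin (del / 2) (d / 2)).
 assert (0 < hh) by (unfold hh; apply Rmin_pos; destruct del; simpl; lra).
 assert (hh <= del / 2) by apply Rmin_l. assert (hh <= d / 2) by apply Rmin_r.
 assert (Hne : hh <> 0) by lra.
 assert (Ha : Rabs hh < del) by (rewrite Rabs_pos_eq; destruct del; simpl in *; lra).
 specialize (Hdel hh Hne Ha). rewrite (E (x + hh)), (E x) in Hdel by lra.
 replace ((g (x + hh) - g (x + hh) - (g x - g x)) / hh - (l1 - l2)) with (- (l1 - l2)) in Hdel by (field; auto).
 rewrite Rabs_Ropp in Hdel. apply Rabs_pos_lt in h. lra.
Qed.

Lemma vright_deriv_unique (F G : R -> V3) x D1 D2 d : 0 < d ->
  vder F x D1 -> vder G x D2 -> (forall y, x <= y < x + d -> F y = G y) -> D1 = D2.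
Proof. intros Hd [a1 [a2 a3]] [b1 [b2 b3]] E. apply V3_ext.
 eapply right_deriv_unique; eauto; intros; simpl; rewrite E; auto.
 eapply right_deriv_unique; eauto; intros; simpl; rewrite E; auto.
 eapply right_deriv_unique; eauto; intros; simpl; rewrite E; auto.
Qed.


Definition Tf (P : V3) := vscal (/ sqrt (dot P P)) P.
Definition Kf (P Q : V3) := vscal (/ (sqrt (dot P P)) ^ 2) (vadd Q (vscal (- dot Q (Tf P)) (Tf P))).

Lemma flow_alg T K c s : vscal (vnorm K) (vadd (vscal c (vscal (/ vnorm K) K)) (vscal s (cross T (vscal (/ vnorm K) K))))
  = vadd (vscal c K) (vscal s (cross T K)).
Proof. destruct (Req_dec (vnorm K) 0) as [h|h].
 - assert (dot K K = 0) by (rewrite <- vnorm_sq, h; ring). apply dot_self_zero in H. subst.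
   rewrite h. unfold v0; vring.
 - apply V3_ext; vunf; field; auto.
Qed.

Ltac sc_close x := match goal with |- ?L = ?R =>
  transitivity (R * (Rsqr (sin x) + Rsqr (cos x))); [unfold Rsqr; ring | rewrite sin2_cos2; ring] end.
Ltac vunf2 := unfold dot, cross, vadd, vscal; cbn [vx vy vz].
Ltac dexp := repeat (rewrite ?dot_add_l, ?dot_add_r, ?dot_scal_l, ?dot_scal_r).

Section Main.
Variable tbar : Rbar.
Variable a : R.
Variables (gam : R -> R -> V3) (th ups : R -> R -> R).
Let S := Sst a tbar.
Hypothesis Hsm : smoothV_on S gam.
Hypothesis Hth : C12_on S th.
Hypothesis Hsp : forall t u, a < t -> Rbar_lt t tbar -> speed gam t u > 0.

Lemma HPt t : S t -> forall n, CkV full n (fun u => duV gam t u).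
Proof. intros Ht n. destruct Hsm as [H1 [H2 H3]]. split; [|split].
 exact (smooth_Ck_u _ _ t H1 Ht n (false :: nil)).
 exact (smooth_Ck_u _ _ t H2 Ht n (false :: nil)).
 exact (smooth_Ck_u _ _ t H3 Ht n (false :: nil)). Qed.
Lemma Hgt t : S t -> forall u, speed gam t u > 0.
Proof. intros [H1 H2] u; apply Hsp; auto. Qed.

Section W.
Variable t : R.
Hypothesis Ht : S t.
Let HP := HPt t Ht.
Let Hg := Hgt t Ht.

Lemma wTT u : dot (Tan gam t u) (Tan gam t u) = 1. Proof. eapply TT; eauto. Qed.
Lemma wTN u : dot (Tan gam t u) (Nor gam t u) = 0. Proof. eapply TN; eauto. Qed.
Lemma wNN u : Uk gam t u -> dot (Nor gam t u) (Nor gam t u) = 1. Proof. intros; eapply NN; eauto. Qed.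
Lemma wTB u : dot (Tan gam t u) (Bin gam t u) = 0. Proof. apply fr_TB. Qed.
Lemma wNB u : dot (Nor gam t u) (Bin gam t u) = 0. Proof. apply fr_NB. Qed.
Lemma wBB u : Uk gam t u -> dot (Bin gam t u) (Bin gam t u) = 1. Proof. intros; eapply BB; eauto. Qed.
Lemma wK_kaN u : dsV gam (Tan gam) t u = vscal (kappa gam t u) (Nor gam t u).
Proof. apply K_kaN. Qed.
Lemma wg_neq u : speed gam t u <> 0. Proof. apply Rgt_not_eq, Hg. Qed.
Lemma wg_sq u : speed gam t u * speed gam t u = dot (duV gam t u) (duV gam t u).
Proof. eapply g_sq; eauto. Qed.
Lemma wP_gT u : duV gam t u = vscal (speed gam t u) (Tan gam t u).
Proof. eapply P_gT; eauto. Qed.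
Lemma wK_formula u : dsV gam (Tan gam) t u = vscal (/ (speed gam t u) ^ 2)
   (vadd (duV (duV gam) t u) (vscal (- dot (duV (duV gam) t u) (Tan gam t u)) (Tan gam t u))).
Proof. eapply K_formula; eauto. Qed.
Lemma wder_g u : is_derive (fun u => speed gam t u) u (dot (duV (duV gam) t u) (Tan gam t u)).
Proof. eapply der_g; eauto. Qed.
Lemma wvder_T u : vder (fun u => Tan gam t u) u (vscal (speed gam t u) (dsV gam (Tan gam) t u)).
Proof. eapply vder_T'; eauto. Qed.
Lemma wFrenet_N u : Uk gam t u -> vder (fun u => Nor gam t u) u
  (vadd (vscal (- speed gam t u * kappa gam t u) (Tan gam t u)) (vscal (speed gam t u * tors gam t u) (Bin gam t u))).
Proof. intros; eapply Frenet_N; eauto. Qed.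
Lemma wFrenet_B u : Uk gam t u -> vder (fun u => Bin gam t u) u (vscal (- speed gam t u * tors gam t u) (Nor gam t u)).
Proof. intros; eapply Frenet_B; eauto. Qed.
Lemma wopen_Uk : open (Uk gam t). Proof. eapply open_Uk; eauto. Qed.
Lemma wCk_ka n : Ck n (Uk gam t) (fun u => kappa gam t u). Proof. eapply Ck_ka; eauto. Qed.
Lemma wCk_tors n : Ck n (Uk gam t) (fun u => tors gam t u). Proof. eapply Ck_tors; eauto. Qed.
Lemma wCk_g n : Ck n full (fun u => speed gam t u). Proof. eapply Ck_g; eauto. Qed.
End W.

Lemma loc_S t : S t -> locally t S.
Proof. intros Ht. destruct (S_nbhd a tbar t Ht) as [d Hd]. exists d. intros y Hy. apply Hd. exact Hy. Qed.

Lemma wNT t (Ht : S t) u : dot (Nor gam t u) (Tan gam t u) = 0. Proof. rewrite dot_comm; apply wTN; auto. Qed.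
Lemma wBT u t : dot (Bin gam t u) (Tan gam t u) = 0. Proof. rewrite dot_comm; apply wTB. Qed.
Lemma wBN u t : dot (Bin gam t u) (Nor gam t u) = 0. Proof. rewrite dot_comm; apply wNB. Qed.

Section At0.
Hypothesis Hflow : forall t u, 0 <= t -> Rbar_lt t tbar ->
     dtV gam t u = vscal (kappa gam t u) (nuth gam th t u).
Hypothesis Hups : forall t u, 0 <= t -> Rbar_lt t tbar -> dt th t u = ups t u.
Variables t0 u0 : R.
Hypothesis Ha : a < 0.
Hypothesis Ht0 : 0 <= t0.
Hypothesis Ht0b : Rbar_lt t0 tbar.
Hypothesis Hk : kappa gam t0 u0 > 0.

Lemma HS0 : S t0. Proof. split; auto; lra. Qed.
Lemma Uk0 : Uk gam t0 u0. Proof. exact Hk. Qed.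

Ltac frw := repeat first [ rewrite wTT by (exact HS0) | rewrite wTN by (exact HS0) | rewrite wNT by (exact HS0)
  | rewrite wTB | rewrite wNB | rewrite wBT | rewrite wBN
  | rewrite wNN by (first [exact HS0 | exact Uk0]) | rewrite wBB by (first [exact HS0 | exact Uk0]) ].

Lemma th_der u : is_derive (fun u => th t0 u) u (du th t0 u).
Proof. apply ex_isd. apply (Hth t0 u HS0). Qed.
Lemma thd_der u : is_derive (fun u => du th t0 u) u (du (du th) t0 u).
Proof. apply ex_isd. apply (Hth t0 u HS0). Qed.

Lemma W_eq u : dtV gam t0 u = vscal (kappa gam t0 u) (nuth gam th t0 u).
Proof. apply Hflow; auto. Qed.

Definition W1 u := vadd (vscal (Derive (fun u => kappa gam t0 u) u) (nuth gam th t0 u))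
  (vadd (vscal (kappa gam t0 u * speed gam t0 u * psi3 gam th t0 u) (betath gam th t0 u))
        (vscal (- (kappa gam t0 u * speed gam t0 u * psi1 gam th t0 u)) (Tan gam t0 u))).

Lemma ka_der u : Uk gam t0 u -> is_derive (fun u => kappa gam t0 u) u (Derive (fun u => kappa gam t0 u) u).
Proof. intros H; apply ex_isd. apply (Ck_ex 0 _ _ u (wCk_ka t0 HS0 1) H). Qed.

Lemma vder_W u : Uk gam t0 u -> vder (fun u => dtV gam t0 u) u (W1 u).
Proof. intros Hu. apply (vder_ext (fun u => vscal (kappa gam t0 u) (nuth gam th t0 u))).
 intros; symmetry; apply W_eq.
 eapply vder_eq. apply vder_scal. apply ka_der; auto. unfold nuth. apply vder_add; apply vder_scal.
 apply isd_cos, th_der. apply wFrenet_N; auto. apply HS0. apply isd_sin, th_der. apply wFrenet_B; auto. apply HS0.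
 pose proof (wg_neq t0 HS0 u). unfold W1, betath, nuth, psi3, psi1, ds. apply V3_ext; vunf2; field; auto.
Qed.

Lemma II12_val : dot (duV (dtV gam) t0 u0) (betath gam th t0 u0) =
  kappa gam t0 u0 * speed gam t0 u0 * psi3 gam th t0 u0.
Proof. change (duV (dtV gam) t0 u0) with (DV (fun u => dtV gam t0 u) u0).
 rewrite (vder_DV _ _ _ (vder_W u0 Uk0)). unfold W1, nuth, betath. dexp. frw.
 sc_close (th t0 u0). Qed.


Lemma g_der u : is_derive (fun u => speed gam t0 u) u (Derive (fun u => speed gam t0 u) u).
Proof. apply ex_isd. apply (Ck_ex 0 full _ u (wCk_g t0 HS0 1) I). Qed.

Lemma kad_der : is_derive (fun u => Derive (fun u => kappa gam t0 u) u) u0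
   (Derive (fun u => Derive (fun u => kappa gam t0 u) u) u0).
Proof. apply ex_isd. apply (Ck_ex 0 (Uk gam t0) _ u0 (Ck_D 1 _ _ (wCk_ka t0 HS0 2)) Uk0). Qed.

Lemma tors_der : is_derive (fun u => tors gam t0 u) u0 (Derive (fun u => tors gam t0 u) u0).
Proof. apply ex_isd. apply (Ck_ex 0 (Uk gam t0) _ u0 (wCk_tors t0 HS0 1) Uk0). Qed.

Lemma ps3_der : is_derive (fun u => psi3 gam th t0 u) u0 (Derive (fun u => psi3 gam th t0 u) u0).
Proof. apply ex_isd. eexists. unfold psi3, ds. apply isd_plus. apply tors_der.
 apply isd_mult. apply thd_der. apply isd_inv. apply g_der. apply (wg_neq t0 HS0). Qed.

Lemma vder_nu u : Uk gam t0 u -> exists D, vder (fun u => nuth gam th t0 u) u D /\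
  dot D (Bin gam t0 u) = cos (th t0 u) * (speed gam t0 u * tors gam t0 u) + cos (th t0 u) * du th t0 u.
Proof. intros Hu. eexists; split. unfold nuth. apply vder_add; apply vder_scal.
 apply isd_cos, th_der. apply wFrenet_N; auto. apply HS0. apply isd_sin, th_der. apply wFrenet_B; auto. apply HS0.
 dexp. rewrite ?wTB, ?wNB, ?wBN. rewrite ?(wBB t0 HS0 u Hu). ring. Qed.

Lemma vder_be u : Uk gam t0 u -> exists D, vder (fun u => betath gam th t0 u) u D /\
  dot D (Bin gam t0 u) = - sin (th t0 u) * (speed gam t0 u * tors gam t0 u) - sin (th t0 u) * du th t0 u.
Proof. intros Hu. eexists; split. unfold betath. apply vder_add; apply vder_scal.
 apply isd_opp, isd_sin, th_der. apply wFrenet_N; auto. apply HS0. apply isd_cos, th_der. apply wFrenet_B; auto. apply HS0.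
 dexp. rewrite ?wTB, ?wNB, ?wBN. rewrite ?(wBB t0 HS0 u Hu). ring. Qed.

Lemma vder_W1 : exists D, vder W1 u0 D /\ dot D (Bin gam t0 u0) =
  Derive (fun u => Derive (fun u => kappa gam t0 u) u) u0 * sin (th t0 u0)
  + Derive (fun u => kappa gam t0 u) u0 * (cos (th t0 u0) * (speed gam t0 u0 * tors gam t0 u0) + cos (th t0 u0) * du th t0 u0)
  + ((Derive (fun u => kappa gam t0 u) u0 * speed gam t0 u0 + kappa gam t0 u0 * Derive (fun u => speed gam t0 u) u0)
        * psi3 gam th t0 u0 + kappa gam t0 u0 * speed gam t0 u0 * Derive (fun u => psi3 gam th t0 u) u0) * cos (th t0 u0)
  + kappa gam t0 u0 * speed gam t0 u0 * psi3 gam th t0 u0 *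
      (- sin (th t0 u0) * (speed gam t0 u0 * tors gam t0 u0) - sin (th t0 u0) * du th t0 u0).
Proof. destruct (vder_nu u0 Uk0) as [Dn [Hn1 Hn2]]. destruct (vder_be u0 Uk0) as [Db [Hb1 Hb2]].
 eexists; split. unfold W1. apply vder_add. apply vder_scal. apply kad_der. exact Hn1.
 apply vder_add. apply vder_scal. apply isd_mult. apply isd_mult. apply ka_der, Uk0. apply g_der. apply ps3_der.
 exact Hb1. apply vder_scal. apply isd_opp. unfold psi1. apply isd_mult. apply isd_mult. apply ka_der, Uk0. apply g_der.
 apply isd_mult. apply ka_der, Uk0. apply isd_cos, th_der. apply wvder_T. apply HS0.
 dexp. rewrite Hn2, Hb2. rewrite wK_kaN. dexp. rewrite ?wTB, ?wNB. unfold nuth, betath. dexp.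
 rewrite ?wNB, ?(wBB t0 HS0 u0 Uk0). ring. Qed.

Lemma Sch1 u : dtV (duV gam) t0 u = duV (dtV gam) t0 u.
Proof. destruct Hsm as [H1 [H2 H3]]. apply V3_ext.
 exact (Schwarz_pder a tbar _ nil t0 u H1 HS0).
 exact (Schwarz_pder a tbar _ nil t0 u H2 HS0).
 exact (Schwarz_pder a tbar _ nil t0 u H3 HS0). Qed.

Lemma Sch2 : dtV (duV (duV gam)) t0 u0 = duV (duV (dtV gam)) t0 u0.
Proof. destruct Hsm as [H1 [H2 H3]]. apply V3_ext.
 exact (Schwarz2 a tbar _ nil t0 u0 H1 HS0).
 exact (Schwarz2 a tbar _ nil t0 u0 H2 HS0).
 exact (Schwarz2 a tbar _ nil t0 u0 H3 HS0). Qed.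

Lemma Pd_val : dtV (duV gam) t0 u0 = W1 u0.
Proof. rewrite Sch1. change (duV (dtV gam) t0 u0) with (DV (fun u => dtV gam t0 u) u0).
 apply vder_DV, vder_W, Uk0. Qed.

Lemma Qd_val D : vder W1 u0 D -> dtV (duV (duV gam)) t0 u0 = D.
Proof. intros HD. rewrite Sch2. change (duV (duV (dtV gam)) t0 u0) with (DV (fun u => duV (dtV gam) t0 u) u0).
 apply vder_DV. eapply vder_ext_loc. 2: exact HD.
 eapply filter_imp. 2: apply (wopen_Uk t0 HS0 u0 Uk0). intros u Hu.
 change (duV (dtV gam) t0 u) with (DV (fun u => dtV gam t0 u) u). symmetry; apply vder_DV, vder_W, Hu. Qed.

Lemma II21_val : dot (dtV (duV gam) t0 u0) (betath gam th t0 u0) =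
  kappa gam t0 u0 * speed gam t0 u0 * psi3 gam th t0 u0.
Proof. rewrite Sch1. apply II12_val. Qed.

Lemma vder_Pt : vder (fun t => duV gam t u0) t0 (dtV (duV gam) t0 u0).
Proof. destruct Hsm as [H1 [H2 H3]]; split; [|split].
 exact (ex_isd _ _ (proj1 (H1 (false::nil) t0 u0 HS0))).
 exact (ex_isd _ _ (proj1 (H2 (false::nil) t0 u0 HS0))).
 exact (ex_isd _ _ (proj1 (H3 (false::nil) t0 u0 HS0))). Qed.
Lemma vder_Qt : vder (fun t => duV (duV gam) t u0) t0 (dtV (duV (duV gam)) t0 u0).
Proof. destruct Hsm as [H1 [H2 H3]]; split; [|split].
 exact (ex_isd _ _ (proj1 (H1 (false::false::nil) t0 u0 HS0))).
 exact (ex_isd _ _ (proj1 (H2 (false::false::nil) t0 u0 HS0))).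
 exact (ex_isd _ _ (proj1 (H3 (false::false::nil) t0 u0 HS0))). Qed.
Lemma vder_gamt : vder (fun t => dtV gam t u0) t0 (dtV (dtV gam) t0 u0).
Proof. destruct Hsm as [H1 [H2 H3]]; split; [|split].
 exact (ex_isd _ _ (proj1 (H1 (true::nil) t0 u0 HS0))).
 exact (ex_isd _ _ (proj1 (H2 (true::nil) t0 u0 HS0))).
 exact (ex_isd _ _ (proj1 (H3 (true::nil) t0 u0 HS0))). Qed.
Lemma th_tder : is_derive (fun t => th t u0) t0 (ups t0 u0).
Proof. rewrite <- Hups; auto. exact (ex_isd _ _ (proj1 (Hth t0 u0 HS0))). Qed.

Lemma PP0_pos : 0 < dot (duV gam t0 u0) (duV gam t0 u0).
Proof. apply sqrt_pos_inv. apply (Hgt t0 HS0 u0). Qed.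

Definition DT0 := vadd (vscal (- ((dot (dtV (duV gam) t0 u0) (duV gam t0 u0) + dot (duV gam t0 u0) (dtV (duV gam) t0 u0))
        / (2 * sqrt (dot (duV gam t0 u0) (duV gam t0 u0)))) / sqrt (dot (duV gam t0 u0) (duV gam t0 u0)) ^ 2)
    (duV gam t0 u0)) (vscal (/ sqrt (dot (duV gam t0 u0) (duV gam t0 u0))) (dtV (duV gam) t0 u0)).

Lemma vder_Tt : vder (fun t => Tan gam t u0) t0 DT0.
Proof. change (fun t => Tan gam t u0) with (fun t => vscal (/ sqrt (dot (duV gam t u0) (duV gam t u0))) (duV gam t u0)).
 eapply vder_eq. apply vder_scal. apply (isd_inv (fun t => sqrt (dot (duV gam t u0) (duV gam t u0)))).
 apply (isd_sqrt (fun t => dot (duV gam t u0) (duV gam t u0))). apply der_dot; apply vder_Pt. apply PP0_pos.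
 apply (wg_neq t0 HS0). apply vder_Pt. unfold DT0. reflexivity. Qed.

Lemma DT0_T : dot DT0 (Tan gam t0 u0) = 0.
Proof. pose proof (der_dot _ _ t0 _ _ vder_Tt vder_Tt) as H. apply (const_deriv0 _ t0 1) in H.
 rewrite (dot_comm (Tan gam t0 u0)) in H. lra.
 eapply filter_imp. 2: apply (loc_S t0 HS0). intros t Ht. apply (wTT t Ht). Qed.

Lemma PB0 : dot (duV gam t0 u0) (Bin gam t0 u0) = 0.
Proof. rewrite (wP_gT t0 HS0 u0), dot_scal_l, wTB; ring. Qed.

Lemma DT0_B : dot DT0 (Bin gam t0 u0) = / speed gam t0 u0 * dot (dtV (duV gam) t0 u0) (Bin gam t0 u0).
Proof. unfold DT0. dexp. rewrite PB0. change (sqrt (dot (duV gam t0 u0) (duV gam t0 u0))) with (speed gam t0 u0). ring. Qed.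

Lemma QB0 : dot (duV (duV gam) t0 u0) (Bin gam t0 u0) = 0.
Proof. pose proof (wK_formula t0 HS0 u0) as H. rewrite wK_kaN in H.
 assert (E : dot (vscal (kappa gam t0 u0) (Nor gam t0 u0)) (Bin gam t0 u0) = 0) by (rewrite dot_scal_l, wNB; ring).
 rewrite H in E. repeat rewrite ?dot_add_l, ?dot_scal_l in E. rewrite wTB in E. pose proof (wg_neq t0 HS0 u0).
 assert (/ speed gam t0 u0 ^ 2 <> 0) by (apply Rinv_neq_0_compat, pow_nonzero; auto).
 apply Rmult_integral in E as [E|E]; [contradiction|]. lra. Qed.

Lemma isd_pow2 (f : R -> R) x df : is_derive f x df -> is_derive (fun y => f y ^ 2) x (2 * f x * df).
Proof. intros H. apply (is_derive_ext (fun y => f y * f y)). intros; simpl; ring.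
 eapply isd_eq. apply isd_mult; exact H. simpl; ring. Qed.

Lemma tK : exists DK, vder (fun t => Kf (duV gam t u0) (duV (duV gam) t u0)) t0 DK /\
  dot DK (Bin gam t0 u0) = / speed gam t0 u0 ^ 2 * (dot (dtV (duV (duV gam)) t0 u0) (Bin gam t0 u0)
     - dot (duV (duV gam) t0 u0) (Tan gam t0 u0) * (/ speed gam t0 u0 * dot (dtV (duV gam) t0 u0) (Bin gam t0 u0))).
Proof. eexists; split. unfold Kf.
 apply vder_scal. apply (isd_inv (fun t => sqrt (dot (duV gam t u0) (duV gam t u0)) ^ 2)).
 apply (isd_pow2 (fun t => sqrt (dot (duV gam t u0) (duV gam t u0)))).
 apply (isd_sqrt (fun t => dot (duV gam t u0) (duV gam t u0))). apply der_dot; apply vder_Pt. apply PP0_pos.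
 apply pow_nonzero, (wg_neq t0 HS0).
 apply vder_add. apply vder_Qt. apply vder_scal. apply isd_opp. apply der_dot. apply vder_Qt. apply vder_Tt. apply vder_Tt.
 change (Tf (duV gam t0 u0)) with (Tan gam t0 u0).
 change (sqrt (dot (duV gam t0 u0) (duV gam t0 u0))) with (speed gam t0 u0).
 dexp. change (Tf (duV gam t0 u0)) with (Tan gam t0 u0).
 change (sqrt (dot (duV gam t0 u0) (duV gam t0 u0))) with (speed gam t0 u0). rewrite QB0, wTB, DT0_B. ring. Qed.

Definition Wf t := vadd (vscal (cos (th t u0)) (Kf (duV gam t u0) (duV (duV gam) t u0)))
   (vscal (sin (th t u0)) (cross (Tf (duV gam t u0)) (Kf (duV gam t u0) (duV (duV gam) t u0)))).

Lemma Wf_eq t : S t -> 0 <= t -> dtV gam t u0 = Wf t.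
Proof. intros Ht Ht'. rewrite Hflow; [|auto|apply Ht]. unfold nuth, Bin, Nor, kappa. rewrite flow_alg.
 rewrite (wK_formula t Ht u0). unfold Wf. reflexivity. Qed.

Lemma II22_val : dot (dtV (dtV gam) t0 u0) (betath gam th t0 u0) =
  kappa gam t0 u0 * ups t0 u0 + / speed gam t0 u0 ^ 2 * (dot (dtV (duV (duV gam)) t0 u0) (Bin gam t0 u0)
     - dot (duV (duV gam) t0 u0) (Tan gam t0 u0) * (/ speed gam t0 u0 * dot (dtV (duV gam) t0 u0) (Bin gam t0 u0))).
Proof. destruct tK as [DK [HK1 HK2]]. rewrite <- HK2.
 pose proof (vder_add _ _ t0 _ _ (vder_scal _ _ t0 _ _ (isd_cos _ _ _ th_tder) HK1)
   (vder_scal _ _ t0 _ _ (isd_sin _ _ _ th_tder) (vder_cross _ _ t0 _ _ vder_Tt HK1))) as HW.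
 destruct (S_nbhd a tbar t0 HS0) as [d Hd].
 rewrite (vright_deriv_unique (fun t => dtV gam t u0) _ t0 _ _ d (cond_pos d) vder_gamt HW).
 2: { intros y Hy. rewrite Wf_eq. reflexivity. apply Hd. rewrite Rabs_pos_eq; lra. lra. }
 unfold Kf. change (Tf (duV gam t0 u0)) with (Tan gam t0 u0).
 change (sqrt (dot (duV gam t0 u0) (duV gam t0 u0))) with (speed gam t0 u0).
 rewrite <- (wK_formula t0 HS0 u0). rewrite wK_kaN. rewrite !cross_scal_r.
 change (cross (Tan gam t0 u0) (Nor gam t0 u0)) with (Bin gam t0 u0).
 assert (HTT : dot (Tan gam t0 u0) (Tan gam t0 u0) = 1) by (apply wTT; exact HS0).
 assert (HNN : dot (Nor gam t0 u0) (Nor gam t0 u0) = 1) by (apply wNN; exact Uk0).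
 assert (HTN : dot (Tan gam t0 u0) (Nor gam t0 u0) = 0) by (apply wTN; exact HS0).
 assert (C1 : cross (Nor gam t0 u0) (betath gam th t0 u0) = vscal (cos (th t0 u0)) (Tan gam t0 u0)).
 { unfold betath. rewrite cross_add_r, !cross_scal_r, cross_self. unfold Bin. rewrite fr_NxB; auto. unfold v0; vring. }
 assert (C2 : cross (betath gam th t0 u0) (Tan gam t0 u0) =
    vadd (vscal (sin (th t0 u0)) (Bin gam t0 u0)) (vscal (cos (th t0 u0)) (Nor gam t0 u0))).
 { unfold betath. rewrite cross_add_l, !cross_scal_l. unfold Bin. rewrite fr_BxT; auto.
   rewrite (cross_anti (Nor gam t0 u0)). vring. }
 dexp. rewrite !dot_cross_l. rewrite C1. rewrite (dot_comm (Tan gam t0 u0) (cross DK _)), dot_cross_l, C2.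
 dexp. rewrite DT0_T. unfold betath. dexp. frw. sc_close (th t0 u0). Qed.

Lemma I11_v : I11 gam t0 u0 = speed gam t0 u0 ^ 2.
Proof. unfold I11. rewrite <- (wg_sq t0 HS0). ring. Qed.
Lemma Tnu0 : dot (Tan gam t0 u0) (nuth gam th t0 u0) = 0.
Proof. unfold nuth; dexp. rewrite wTN by exact HS0. rewrite wTB. ring. Qed.
Lemma I12_v : I12 gam t0 u0 = 0.
Proof. unfold I12. rewrite W_eq, (wP_gT t0 HS0 u0). dexp. rewrite Tnu0. ring. Qed.
Lemma I21_v : I21 gam t0 u0 = 0.
Proof. unfold I21. rewrite dot_comm. apply I12_v. Qed.
Lemma I22_v : I22 gam t0 u0 = kappa gam t0 u0 ^ 2.
Proof. unfold I22. rewrite W_eq. unfold nuth. dexp. frw. sc_close (th t0 u0). Qed.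
Lemma II11_v : II11 gam th t0 u0 = - speed gam t0 u0 ^ 2 * kappa gam t0 u0 * sin (th t0 u0).
Proof. unfold II11.
 assert (E : dot (dsV gam (Tan gam) t0 u0) (betath gam th t0 u0) = - kappa gam t0 u0 * sin (th t0 u0)).
 { rewrite wK_kaN. unfold betath. dexp. frw. ring. }
 rewrite (wK_formula t0 HS0 u0) in E. repeat rewrite ?dot_add_l, ?dot_scal_l in E.
 assert (Tb : dot (Tan gam t0 u0) (betath gam th t0 u0) = 0) by (unfold betath; dexp; frw; ring).
 rewrite Tb in E. pose proof (wg_neq t0 HS0 u0).
 replace (dot (duV (duV gam) t0 u0) (betath gam th t0 u0)) with
   (speed gam t0 u0 ^ 2 * (/ speed gam t0 u0 ^ 2 * (dot (duV (duV gam) t0 u0) (betath gam th t0 u0) +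
       - dot (duV (duV gam) t0 u0) (Tan gam t0 u0) * 0))) by (field; auto).
 rewrite E. ring. Qed.

Lemma gd_val : Derive (fun u => speed gam t0 u) u0 = dot (duV (duV gam) t0 u0) (Tan gam t0 u0).
Proof. apply is_derive_unique. apply (wder_g t0 HS0). Qed.

Lemma dsds_val : ds gam (ds gam (kappa gam)) t0 u0 =
  (Derive (fun u => Derive (fun u => kappa gam t0 u) u) u0 * / speed gam t0 u0
   + Derive (fun u => kappa gam t0 u) u0 * (- Derive (fun u => speed gam t0 u) u0 / speed gam t0 u0 ^ 2))
  / speed gam t0 u0.
Proof. unfold ds at 1. f_equal. apply is_derive_unique. unfold ds, du.
 apply (isd_mult (fun u => Derive (fun u => kappa gam t0 u) u) (fun u => / speed gam t0 u)).
 apply kad_der. apply (isd_inv (fun u => speed gam t0 u)). apply g_der. apply (wg_neq t0 HS0). Qed.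

Lemma W1B : dot (W1 u0) (Bin gam t0 u0) = Derive (fun u => kappa gam t0 u) u0 * sin (th t0 u0)
   + kappa gam t0 u0 * speed gam t0 u0 * psi3 gam th t0 u0 * cos (th t0 u0).
Proof. unfold W1, nuth, betath. dexp. frw. ring. Qed.

Lemma main_at0 :
    let k := kappa gam t0 u0 in
    let p1 := psi1 gam th t0 u0 in
    let p2 := psi2 gam th t0 u0 in
    let p3 := psi3 gam th t0 u0 in
    let chi := ups t0 u0 / k
               + (k * ds gam (psi3 gam th) t0 u0 + 2 * ds gam (kappa gam) t0 u0 * p3) / k ^ 3 * p1
               + (ds gam (ds gam (kappa gam)) t0 u0 - k * p3 ^ 2) / k ^ 3 * p2 in
    meanH gam th t0 u0 = - p2 + chi /\
    gaussK gam th t0 u0 = - p3 ^ 2 - p2 * chi.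
Proof. intros k p1 p2 p3 chi.
 assert (H22 : II22 gam th t0 u0 = kappa gam t0 u0 * ups t0 u0 + / speed gam t0 u0 ^ 2 *
   (dot (dtV (duV (duV gam)) t0 u0) (Bin gam t0 u0) - dot (duV (duV gam) t0 u0) (Tan gam t0 u0) *
     (/ speed gam t0 u0 * dot (dtV (duV gam) t0 u0) (Bin gam t0 u0)))) by apply II22_val.
 destruct vder_W1 as [D [HD1 HD2]]. rewrite (Qd_val D HD1), HD2, Pd_val, W1B, <- gd_val in H22.
 assert (H12 : II12 gam th t0 u0 = kappa gam t0 u0 * speed gam t0 u0 * psi3 gam th t0 u0) by apply II12_val.
 assert (H21 : II21 gam th t0 u0 = kappa gam t0 u0 * speed gam t0 u0 * psi3 gam th t0 u0) by apply II21_val.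
 assert (Htau : tors gam t0 u0 = psi3 gam th t0 u0 - du th t0 u0 / speed gam t0 u0) by (unfold psi3, ds; ring).
 rewrite Htau in H22.
 unfold chi, p1, p2, p3, k. rewrite dsds_val. unfold psi1, psi2.
 unfold meanH, gaussK, detI, detII. rewrite H22, H12, H21, II11_v, I11_v, I12_v, I21_v, I22_v.
 unfold ds, du. pose proof (wg_neq t0 HS0 u0). assert (kappa gam t0 u0 <> 0) by (apply Rgt_not_eq, Hk).
 split; field; auto. Qed.
End At0.
End Main.

Theorem mainTheorem1
  (tbar : Rbar) (a : R) (gam : R -> R -> V3) (th ups : R -> R -> R) :
  Rbar_lt 0 tbar -> a < 0 ->
  (* regularity on an open strip (a, tbar) x R containing [0, tbar) x R *)
  smoothV_on (fun t => a < t /\ Rbar_lt t tbar) gam ->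
  C12_on (fun t => a < t /\ Rbar_lt t tbar) th ->
  C1_on (fun t => a < t /\ Rbar_lt t tbar) ups ->
  (* closed curves (u in S^1 = R / 2 pi Z), theta is S^1-valued *)
  (forall t u, gam t (u + 2 * PI) = gam t u) ->
  (forall t u, exists k : Z, th t (u + 2 * PI) = th t u + 2 * PI * IZR k) ->
  (forall t u, ups t (u + 2 * PI) = ups t u) ->
  (* regular parametrizations *)
  (forall t u, a < t -> Rbar_lt t tbar -> speed gam t u > 0) ->
  (* framed curvature flow with theta-velocity ups *)
  (forall t u, 0 <= t -> Rbar_lt t tbar ->
     dtV gam t u = vscal (kappa gam t u) (nuth gam th t u)) ->
  (forall t u, 0 <= t -> Rbar_lt t tbar -> dt th t u = ups t u) ->
  forall t u, 0 <= t -> Rbar_lt t tbar -> kappa gam t u > 0 ->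
    let k := kappa gam t u in
    let p1 := psi1 gam th t u in
    let p2 := psi2 gam th t u in
    let p3 := psi3 gam th t u in
    let chi := ups t u / k
               + (k * ds gam (psi3 gam th) t u + 2 * ds gam (kappa gam) t u * p3) / k ^ 3 * p1
               + (ds gam (ds gam (kappa gam)) t u - k * p3 ^ 2) / k ^ 3 * p2 in
    meanH gam th t u = - p2 + chi /\
    gaussK gam th t u = - p3 ^ 2 - p2 * chi.
Proof.
  intros H0 Ha Hsm Hth Hups1 Hper1 Hper2 Hper3 Hsp Hflow Hups t u Ht Htb Hk.
  exact (main_at0 tbar a gam th ups Hsm Hth Hsp Hflow Hups t u Ha Ht Htb Hk).
Qed.
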